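(* Let $\mathbf{M},\mathbf{N}\in\mathbb{K}^{I_1\times I_2}$ have ranks $R_{\mathbf{M}}\geq R_{\mathbf{N}}$. Then there is a unitary $\mathbf{U}\in\mathbb{K}^{I_1\times I_1}$ with $\mathrm{ran}\,\mathbf{M}\supseteq\mathrm{ran}\,\mathbf{U}\mathbf{N}$ and $\|\mathbf{M}-\mathbf{U}\mathbf{N}\|_{\mathrm{F}}\leq\|\mathbf{M}-\mathbf{N}\|_{\mathrm{F}}$. Consequently, for any $\mathbf{U}_{\mathbf{M}}\in\mathbb{K}^{I_1\times R_{\mathbf{M}}}$ with orthonormal columns and range $\mathrm{ran}\,\mathbf{M}$, there is $\mathbf{U}_{\mathbf{N}}\in\mathbb{K}^{I_1\times R_{\mathbf{M}}}$ with orthonormal columns such that $\mathrm{ran}\,\mathbf{U}_{\mathbf{N}}\supseteq\mathrm{ran}\,\mathbf{N}$ and $\|\mathbf{U}_{\mathbf{M}}^{\mathrm{H}}\mathbf{M}-\mathbf{U}_{\mathbf{N}}^{\mathrm{H}}\mathbf{N}\|_{\mathrm{F}}\leq\|\mathbf{M}-\mathbf{N}\|_{\mathrm{F}}$.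
   Context: $\mathbb{K}$ denotes $\mathbb{R}$ or $\mathbb{C}$; $\mathrm{ran}$ denotes the column space; $\|\cdot\|_{\mathrm{F}}$ the Frobenius norm. *)

(* Defs.v *)
From HB Require Import structures.
From mathcomp Require Import all_boot all_order all_algebra.
From mathcomp Require Export complex.
Set Implicit Arguments. Unset Strict Implicit. Unset Printing Implicit Defensive.
Import Order.TTheory GRing.Theory Num.Theory.
Local Open Scope ring_scope.

(* The scalar field K is a numFieldType equipped with its conjugation
   [conj] (identity for the reals, complex conjugation for C) and its
   nonnegative square root [sqrtK] (used only for the Frobenius norm). *)

Definition adjmx (K : numFieldType) (conj : K -> K) (m n : nat)
  (A : 'M[K]_(m, n)) : 'M[K]_(n, m) := map_mx conj A^T.

Definition unitary_mx (K : numFieldType) (conj : K -> K) (n : nat)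
  (U : 'M[K]_n) : Prop :=
  adjmx conj U *m U = 1%:M /\ U *m adjmx conj U = 1%:M.

Definition orthonormal_cols (K : numFieldType) (conj : K -> K) (m r : nat)
  (U : 'M[K]_(m, r)) : Prop := adjmx conj U *m U = 1%:M.

(* Column space inclusion  ran A \subseteq ran B  (column spaces of A, B
   are the row spaces of their transposes). *)
Definition ran_sub (K : numFieldType) (m n p : nat)
  (A : 'M[K]_(m, n)) (B : 'M[K]_(m, p)) : Prop := (A^T <= B^T)%MS.

Definition ran_eq (K : numFieldType) (m n p : nat)
  (A : 'M[K]_(m, n)) (B : 'M[K]_(m, p)) : Prop := (A^T == B^T)%MS.

Definition frob (K : numFieldType) (sqrtK : K -> K) (m n : nat)
  (A : 'M[K]_(m, n)) : K :=
  sqrtK (\sum_(i < m) \sum_(j < n) `|A i j| ^+ 2).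

Definition lemma4p2_over (K : numFieldType) (conj : K -> K) (sqrtK : K -> K)
  : Prop :=
  forall (I1 I2 : nat) (M N : 'M[K]_(I1, I2)),
    (\rank N <= \rank M)%N ->
    (exists U : 'M[K]_I1,
        unitary_mx conj U /\
        ran_sub (U *m N) M /\
        frob sqrtK (M - U *m N) <= frob sqrtK (M - N))
    /\
    (forall UM : 'M[K]_(I1, \rank M),
        orthonormal_cols conj UM -> ran_eq UM M ->
        exists UN : 'M[K]_(I1, \rank M),
          orthonormal_cols conj UN /\
          ran_sub N UN /\
          frob sqrtK (adjmx conj UM *m M - adjmx conj UN *m N)
            <= frob sqrtK (M - N)).

(* Main.v *)
Require Import Defs.
From HB Require Import structures.
From mathcomp Require Import all_boot all_order all_algebra.
From mathcomp Require Import complex ring.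
Set Implicit Arguments. Unset Strict Implicit. Unset Printing Implicit Defensive.
Import Order.TTheory GRing.Theory Num.Theory.
Local Open Scope ring_scope.

Record cstr (K : numFieldType) := CStr {
  cj : {rmorphism K -> K};
  sq : K -> K;
  cjK : involutive cj;
  cj_real : forall x, x \is Num.real -> cj x = x;
  re2_real : forall x, x + cj x \is Num.real;
  normE : forall x : K, `|x| ^+ 2 = x * cj x;
  sq_ge0 : forall x, 0 <= x -> 0 <= sq x;
  sqK : forall x, 0 <= x -> sq x ^+ 2 = x;
  sq_le : forall x y, 0 <= x -> x <= y -> sq x <= sq y }.

Section Gen.
Variable K : numFieldType.
Variable S : cstr K.
Local Notation cj := (cj S).
Local Notation ad := (adjmx cj).

Lemma adjK m n (A : 'M[K]_(m, n)) : ad (ad A) = A.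
Proof. by apply/matrixP => i j; rewrite !mxE cjK. Qed.

Lemma adjM m n p (A : 'M[K]_(m, n)) (B : 'M[K]_(n, p)) :
  ad (A *m B) = ad B *m ad A.
Proof. by rewrite /adjmx trmx_mul map_mxM. Qed.

Lemma adjD m n (A B : 'M[K]_(m, n)) : ad (A + B) = ad A + ad B.
Proof. by apply/matrixP => i j; rewrite !mxE rmorphD. Qed.

Lemma adjN m n (A : 'M[K]_(m, n)) : ad (- A) = - ad A.
Proof. by apply/matrixP => i j; rewrite !mxE rmorphN. Qed.

Lemma adjB m n (A B : 'M[K]_(m, n)) : ad (A - B) = ad A - ad B.
Proof. by rewrite adjD adjN. Qed.

Lemma adjZ m n a (A : 'M[K]_(m, n)) : ad (a *: A) = cj a *: ad A.
Proof. by apply/matrixP => i j; rewrite !mxE rmorphM. Qed.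

Lemma adj0 m n : ad (0 : 'M[K]_(m, n)) = 0.
Proof. by apply/matrixP => i j; rewrite !mxE rmorph0. Qed.

Lemma adj_scalar n a : ad (a%:M : 'M[K]_n) = (cj a)%:M.
Proof. by apply/matrixP => i j; rewrite !mxE rmorphMn eq_sym. Qed.

Lemma adj1 n : ad (1%:M : 'M[K]_n) = 1%:M.
Proof. by rewrite adj_scalar rmorph1. Qed.

Definition ip m n (X Y : 'M[K]_(m, n)) := \sum_i \sum_j cj (X i j) * Y i j.

Lemma ipE m n (X Y : 'M[K]_(m, n)) : ip X Y = \tr (ad X *m Y).
Proof.
rewrite /ip /mxtrace exchange_big /=; apply: eq_bigr => j _.
by rewrite !mxE; apply: eq_bigr => i _; rewrite !mxE.
Qed.

Lemma ip_mulr m n p (A : 'M[K]_(m, n)) (X : 'M[K]_(m, p)) (Y : 'M[K]_(n, p)) :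
  ip X (A *m Y) = ip (ad A *m X) Y.
Proof. by rewrite !ipE adjM adjK mulmxA. Qed.

Lemma ip_conj m n (X Y : 'M[K]_(m, n)) : cj (ip X Y) = ip Y X.
Proof.
rewrite /ip rmorph_sum; apply: eq_bigr => i _; rewrite rmorph_sum.
by apply: eq_bigr => j _; rewrite rmorphM cjK mulrC.
Qed.

Lemma ipDr m n (X Y Z : 'M[K]_(m, n)) : ip X (Y + Z) = ip X Y + ip X Z.
Proof. by rewrite !ipE mulmxDr mxtraceD. Qed.
Lemma ipDl m n (X Y Z : 'M[K]_(m, n)) : ip (Y + Z) X = ip Y X + ip Z X.
Proof. by rewrite !ipE adjD mulmxDl mxtraceD. Qed.
Lemma ipNr m n (X Y : 'M[K]_(m, n)) : ip X (- Y) = - ip X Y.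
Proof. by rewrite !ipE mulmxN (raddfN (@mxtrace _ _)). Qed.
Lemma ipNl m n (X Y : 'M[K]_(m, n)) : ip (- Y) X = - ip Y X.
Proof. by rewrite !ipE adjN mulNmx (raddfN (@mxtrace _ _)). Qed.
Lemma ipZr m n a (X Y : 'M[K]_(m, n)) : ip X (a *: Y) = a * ip X Y.
Proof. by rewrite !ipE -scalemxAr mxtraceZ. Qed.
Lemma ip0l m n (Y : 'M[K]_(m, n)) : ip 0 Y = 0.
Proof. by rewrite ipE adj0 mul0mx mxtrace0. Qed.

Lemma ip_col m1 m2 n (a X : 'M[K]_(m1, n)) (b Y : 'M[K]_(m2, n)) :
  ip (col_mx a b) (col_mx X Y) = ip a X + ip b Y.
Proof.
rewrite /ip big_split_ord /=; congr (_ + _); apply: eq_bigr => i _;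
by apply: eq_bigr => j _; rewrite ?col_mxEu ?col_mxEd.
Qed.

Lemma ip_ge0 m n (X : 'M[K]_(m, n)) : 0 <= ip X X.
Proof.
apply: sumr_ge0 => i _; apply: sumr_ge0 => j _.
by rewrite mulrC -(normE S) exprn_ge0.
Qed.

Lemma ip_eq0 m n (X : 'M[K]_(m, n)) : ip X X = 0 -> X = 0.
Proof.
have h (x : K) : 0 <= cj x * x by rewrite mulrC -(normE S) exprn_ge0.
rewrite /ip => H; apply/matrixP => i j; rewrite mxE.
have H1 := psumr_eq0P (fun i _ => sumr_ge0 _ (fun j _ => h (X i j))) H.
have H2 := psumr_eq0P (fun j _ => h (X i j)) (H1 i isT).
have := H2 j isT; rewrite mulrC -(normE S) => /eqP.
by rewrite expf_eq0 /= normr_eq0 => /eqP.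
Qed.

Definition re2 (x : K) := x + cj x.

Lemma frobE m n (A : 'M[K]_(m, n)) : \sum_(i < m) \sum_(j < n) `|A i j| ^+ 2 = ip A A.
Proof. by apply: eq_bigr => i _; apply: eq_bigr => j _; rewrite (normE S) mulrC. Qed.

Definition uni n (U : 'M[K]_n) := ad U *m U = 1%:M /\ U *m ad U = 1%:M.

Lemma uni1 n : uni (1%:M : 'M[K]_n).
Proof. by rewrite /uni adj1 mul1mx. Qed.

Lemma uniM n (U V : 'M[K]_n) : uni U -> uni V -> uni (U *m V).
Proof.
move=> [U1 U2] [V1 V2]; rewrite /uni adjM; split.
  by rewrite mulmxA -(mulmxA _ _ U) U1 mulmx1 V1.
by rewrite mulmxA -(mulmxA _ V) V2 mulmx1 U2.
Qed.

Lemma uniV n (U : 'M[K]_n) : uni U -> uni (ad U).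
Proof. by move=> [U1 U2]; rewrite /uni adjK. Qed.

Lemma ip_uni m n (U : 'M[K]_m) (X Y : 'M[K]_(m, n)) : uni U ->
  ip (U *m X) (U *m Y) = ip X Y.
Proof. by move=> [U1 _]; rewrite ip_mulr mulmxA U1 mul1mx. Qed.


Lemma ipZl m n a (X Y : 'M[K]_(m, n)) : ip (a *: X) Y = cj a * ip X Y.
Proof. by rewrite !ipE adjZ -scalemxAl mxtraceZ. Qed.

Lemma ip_mx m n p (X : 'M[K]_(m, n)) (Y : 'M[K]_(m, p)) i j :
  (ad X *m Y) i j = ip (col i X) (col j Y).
Proof.
rewrite mxE /ip; apply: eq_bigr => k _.
by rewrite big_ord1 !mxE.
Qed.

Lemma cv_ip n (e f : 'cV[K]_n) : ad e *m f = (ip e f)%:M.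
Proof. by rewrite {1}[ad e *m f]mx11_scalar ip_mx !col_id. Qed.

Lemma sq_real x : 0 <= x -> sq S x \is Num.real.
Proof. by move=> h; apply: ger0_real; apply: sq_ge0. Qed.

Lemma sq_neq0 x : 0 < x -> sq S x != 0.
Proof.
move=> h; apply/eqP => h0; have := sqK S (ltW h); rewrite h0 expr0n /= => h1.
by move: h; rewrite -h1 ltxx.
Qed.

Lemma cjr x : x \is Num.real -> cj x = x.
Proof. exact: cj_real. Qed.

Lemma normalize m n (X : 'M[K]_(m, n)) : X != 0 ->
  let a := (sq S (ip X X))^-1 in
  [/\ a \is Num.real, a != 0 & ip (a *: X) (a *: X) = 1].
Proof.
move=> X0 a.
have s0 : 0 < ip X X.
  by rewrite lt_def ip_ge0 andbT; apply/eqP => /ip_eq0 /eqP; apply/negP.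
have ar : a \is Num.real by rewrite realV sq_real // ltW.
split => //; first by rewrite invr_eq0 sq_neq0.
rewrite ipZl ipZr cjr // mulrA -expr2 /a exprVn sqK ?(ltW s0) //.
by rewrite mulVf // gt_eqF.
Qed.

Lemma unit_ortho n m (A : 'M[K]_(n.+1, m)) : (\rank A < n.+1)%N ->
  exists e : 'cV[K]_n.+1, [/\ ip e e = 1, ad e *m A = 0 & e 0 0 \is Num.real].
Proof.
move=> rA.
set x0 := nz_row (kermx A).
have x00 : x0 != 0.
  by rewrite nz_row_eq0 -mxrank_eq0 mxrank_ker subn_eq0 -ltnNge.
have x0A : x0 *m A = 0 by apply/sub_kermxP; apply: nz_row_sub.
pose c := if x0 0 0 == 0 then 1 else cj (x0 0 0).
have c0 : c != 0.
  rewrite /c; case: (eqVneq (x0 0 0) 0) => [_|h]; first exact: oner_neq0.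
  apply: contra h => /eqP h; apply/eqP; rewrite -[x0 0 0](cjK S) h rmorph0 //.
set x := c *: x0.
have x_0 : x != 0 by rewrite scaler_eq0 negb_or c0.
have xA : x *m A = 0 by rewrite -scalemxAl x0A scaler0.
have xr : x 0 0 \is Num.real.
  rewrite mxE /c; case: eqP => [->|_]; first by rewrite mulr0 real0.
  by rewrite mulrC -(normE S) realX // normr_real.
have adx0 : ad x != 0.
  by apply: contra x_0 => /eqP h; rewrite -[x]adjK h adj0.
have [ar a0 h] := normalize adx0.
exists ((sq S (ip (ad x) (ad x)))^-1 *: ad x); split => //.
  by rewrite adjZ adjK -scalemxAl xA scaler0.
by rewrite !mxE; apply: realM => //; rewrite cjr; move: xr; rewrite mxE.
Qed.

Definition e0 n : 'cV[K]_(1 + n) := col_mx 1%:M 0.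

Lemma e0_mul n m (X : 'M[K]_(1 + n, m)) : ad (e0 n) *m X = usubmx X.
Proof.
have -> : ad (e0 n) = row_mx 1%:M 0.
  apply/matrixP => i j; rewrite !mxE; case: splitP => k _; rewrite !mxE.
    by rewrite rmorph_nat eq_sym.
  exact: raddf0.
by rewrite -{1}[X]vsubmxK mul_row_col mul1mx mul0mx addr0.
Qed.

Lemma ip_e0 n : ip (e0 n) (e0 n) = 1.
Proof. by rewrite /e0 ip_col ip0l addr0 /ip big_ord1 big_ord1 !mxE /= rmorph1 mulr1. Qed.

Lemma ip_e0l n (y : 'cV[K]_(1 + n)) : ip (e0 n) y = y 0 0.
Proof.
have := cv_ip (e0 n) y; rewrite e0_mul => /matrixP /(_ 0 0).
rewrite !mxE /= mulr1n => <-.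
by congr (y _ _); apply: val_inj.
Qed.

Lemma house n (y : 'cV[K]_(1 + n)) : ip y y = 1 -> y 0 0 \is Num.real ->
  exists W : 'M[K]_(1 + n), uni W /\
    forall m (X : 'M[K]_(1 + n, m)), ad y *m X = 0 -> usubmx (W *m X) = 0.
Proof.
move=> yy yr.
set w := e0 n - y.
have [w0|w0] := eqVneq w 0.
  exists 1%:M; split; first exact: uni1.
  move=> m X; have -> : y = e0 n by apply/eqP; rewrite eq_sym -subr_eq0 -/w w0.
  by rewrite mul1mx e0_mul.
set d := ip w w.
set r := y 0 0.
have cr : cj r = r by rewrite cjr.
have dE : d = 2%:R - (r + r).
  rewrite /d /w ipDl !ipDr !ipNl !ipNr ip_e0 yy ip_e0l -ip_conj ip_e0l -/r cr.
  by rewrite opprK mulr2n; ring.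
have ewE : ip (e0 n) w = 1 - r by rewrite /w ipDr ipNr ip_e0 ip_e0l.
have d0 : d != 0 by apply: contra w0 => /eqP /ip_eq0 ->.
set k := 2%:R / d.
have kr : k \is Num.real by rewrite realM ?realV ?ger0_real ?ip_ge0.
have d' : d = 2%:R * (1 - r) by rewrite dE; ring.
have r1 : 1 - r != 0 by apply: contra d0; rewrite d' => /eqP ->; rewrite mulr0.
have two0 : (2%:R : K) != 0 by rewrite pnatr_eq0.
have k1 : k * (1 - r) = 1.
  by rewrite /k d'; field.
set Q := w *m ad w.
have QQ : Q *m Q = d *: Q.
  by rewrite /Q mulmxA -(mulmxA w) cv_ip mul_mx_scalar -scalemxAl.
have kk : k * (k * d) = k + k.
  by rewrite /k; field.
set W := 1%:M - k *: Q.
have adW : ad W = W.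
  by rewrite /W adjB adj1 adjZ cjr // /Q adjM adjK.
exists W; split.
  have WW : W *m W = 1%:M.
    rewrite /W mulmxBl mul1mx mulmxBr mulmx1 -scalemxAl -scalemxAr QQ !scalerA -mulrA kk.
    by rewrite scalerDl opprB addrK subrK.
  by rewrite /uni adW.
move=> m X yX.
rewrite -e0_mul mulmxA.
have -> : ad (e0 n) *m W = ad y.
  rewrite /W mulmxBr mulmx1 -scalemxAr /Q mulmxA cv_ip ewE mul_scalar_mx scalerA k1 scale1r.
  by rewrite -adjB /w opprB addrC subrK.
exact: yX.
Qed.

Lemma adj_block m1 m2 n1 n2 (a : 'M[K]_(m1, n1)) (b : 'M[K]_(m1, n2))
  (c : 'M[K]_(m2, n1)) (d : 'M[K]_(m2, n2)) :
  ad (block_mx a b c d) = block_mx (ad a) (ad c) (ad b) (ad d).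
Proof. by rewrite /adjmx tr_block_mx map_block_mx. Qed.

Section Rot.
Variables (n : nat) (u : 'cV[K]_n) (al be : K).
Hypotheses (uu1 : ip u u = 1) (alr : cj al = al) (ber : cj be = be)
  (hab : al * al + be * be = 1).

Let Q := u *m ad u.
Let P : 'M[K]_n := 1%:M - (1 - al) *: Q.
Definition rotG : 'M[K]_(1 + n) :=
  block_mx (al%:M : 'M_1) (- be *: ad u) (be *: u) P.

Let uu : ad u *m u = 1%:M.
Proof. by rewrite cv_ip uu1. Qed.

Let QQ : Q *m Q = Q.
Proof. by rewrite /Q mulmxA -(mulmxA u) uu mulmx1. Qed.

Let uP : ad u *m P = al *: ad u.
Proof.
rewrite /P mulmxBr mulmx1 -scalemxAr /Q mulmxA uu mul1mx.
by apply/matrixP => i j; rewrite !mxE; ring.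
Qed.

Let Pu : P *m u = al *: u.
Proof.
rewrite /P mulmxBl mul1mx -scalemxAl /Q -mulmxA uu mulmx1.
by apply/matrixP => i j; rewrite !mxE; ring.
Qed.

Let PP : P *m P + (be * be) *: Q = 1%:M.
Proof.
rewrite /P mulmxBl mul1mx mulmxBr mulmx1 -scalemxAl -scalemxAr QQ scalerA.
have e : (be * be) = 1 - al * al by rewrite -hab; ring.
rewrite e.
by apply/matrixP => i j; rewrite !mxE; ring.
Qed.

Let adP : ad P = P.
Proof. by rewrite /P adjB adj1 adjZ (rmorphB cj) (rmorph1 cj) alr /Q adjM adjK. Qed.

Let adG : ad rotG = block_mx (al%:M : 'M_1) (be *: ad u) (- be *: u) P.
Proof.
by rewrite /rotG adj_block adj_scalar alr !adjZ adjK rmorphN ber adP.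
Qed.

Lemma rot_uni : uni rotG.
Proof.
have e1 : (al * al + be * be)%:M = 1%:M :> 'M[K]_1 by rewrite hab.
split; rewrite adG /rotG mulmx_block (scalar_mx_block 1 n 1).
- congr block_mx.
  + rewrite -scalar_mxM -scalemxAl -scalemxAr uu scalerA scalemx1 -e1.
    by apply/matrixP => i j; rewrite !mxE mulrnDl.
  + rewrite mul_scalar_mx -scalemxAl uP !scalerA.
    by apply/matrixP => i j; rewrite !mxE; ring.
  + rewrite mul_mx_scalar -scalemxAr Pu !scalerA.
    by apply/matrixP => i j; rewrite !mxE; ring.
  + rewrite -scalemxAl -scalemxAr scalerA -PP addrC mulrNN //.
- congr block_mx.
  + rewrite -scalar_mxM -scalemxAl -scalemxAr uu scalerA scalemx1 mulrNN -e1.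
    by apply/matrixP => i j; rewrite !mxE mulrnDl.
  + rewrite mul_scalar_mx -scalemxAl uP !scalerA.
    by apply/matrixP => i j; rewrite !mxE; ring.
  + rewrite mul_mx_scalar -scalemxAr Pu !scalerA.
    by apply/matrixP => i j; rewrite !mxE; ring.
  + by rewrite -scalemxAl -scalemxAr scalerA -PP addrC.
Qed.

Lemma rot_mul m (b : 'rV[K]_m) (A : 'M[K]_(n, m)) :
  rotG *m col_mx b A =
  col_mx (al *: b - be *: (ad u *m A))
         (A + be *: (u *m b) - (1 - al) *: (u *m (ad u *m A))).
Proof.
rewrite /rotG mul_block_col mul_scalar_mx -scalemxAl -scalemxAl.
rewrite /P mulmxBl mul1mx -scalemxAl /Q -mulmxA.
congr col_mx; apply/matrixP => i j; rewrite !mxE; ring.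
Qed.

End Rot.

Lemma ip_adj m n (X Y : 'M[K]_(m, n)) : ip (ad X) (ad Y) = ip Y X.
Proof.
rewrite /ip exchange_big /=; apply: eq_bigr => i _; apply: eq_bigr => j _.
by rewrite !mxE cjK mulrC.
Qed.

Lemma re2_lin m n (X Y Z : 'M[K]_(m, n)) k : cj k = k ->
  re2 (ip X (Y + k *: Z)) = re2 (ip X Y) + k * re2 (ip X Z).
Proof.
move=> hk; rewrite /re2 ipDr ipZr (rmorphD cj) (rmorphM cj) hk; ring.
Qed.

Lemma re2r x : re2 x \is Num.real.
Proof. exact: re2_real. Qed.

Lemma sq1 : sq S 1 = 1.
Proof.
have h0 := sq_ge0 S (@ler01 K); have h1 := sqK S (@ler01 K).
have : (sq S 1 - 1) * (sq S 1 + 1) = 0 by rewrite -subr_sqr h1 expr1n subrr.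
move/eqP; rewrite mulf_eq0 => /orP [/eqP h|h].
  by apply/eqP; rewrite -subr_eq0 h.
have : 0 < sq S 1 + 1 by rewrite ltr_wpDl.
by rewrite lt_def h.
Qed.

Lemma fold n m (M2 A : 'M[K]_(n, m)) (b : 'rV[K]_m) :
  (\rank (col_mx b A) <= n)%N ->
  exists G : 'M[K]_(1 + n), exists A' : 'M[K]_(n, m),
    [/\ uni G, G *m col_mx b A = col_mx 0 A' & re2 (ip M2 A) <= re2 (ip M2 A')].
Proof.
move=> rk.
have [->|b0] := eqVneq b 0.
  by exists 1%:M, A; split; [exact: uni1 | rewrite mul1mx |].
have key (u : 'cV[K]_n) k1 k2 : 0 <= k1 -> k2 <= 0 -> cj k1 = k1 -> cj k2 = k2 ->
    (exists G, uni G /\ G *m col_mx b A = col_mx 0 (A + k1 *: (u *m b))) ->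
    (exists G, uni G /\ G *m col_mx b A = col_mx 0 (A + k2 *: (u *m b))) ->
    exists G : 'M[K]_(1 + n), exists A' : 'M[K]_(n, m),
    [/\ uni G, G *m col_mx b A = col_mx 0 A' & re2 (ip M2 A) <= re2 (ip M2 A')].
  move=> k1p k2n c1 c2 [G1 [G1u G1e]] [G2 [G2u G2e]].
  have := real_leVge (re2r (ip M2 (u *m b))) (real0 K) => /orP [gn|gp].
    exists G2, (A + k2 *: (u *m b)); split => //.
    by rewrite re2_lin // lerDl mulr_le0.
  exists G1, (A + k1 *: (u *m b)); split => //.
  by rewrite re2_lin // lerDl mulr_ge0.
have [rA|rA] := ltnP (\rank A) n.
  case: n M2 A rk rA key => [|n] M2 A rk rA key; first by [].
  have [e [ee eA _]] := unit_ortho rA.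
  have gen (be : K) : be * be = 1 -> cj be = be ->
      exists G, uni G /\ G *m col_mx b A = col_mx 0 (A + be *: (e *m b)).
    move=> hb cb.
    have h0 : cj 0 = 0 := rmorph0 cj.
    have hab : 0 * 0 + be * be = 1 by rewrite mul0r add0r.
    exists (rotG e 0 be); split; first exact: rot_uni.
    rewrite rot_mul eA mulmx0 !scaler0 scale0r subr0 subr0; congr col_mx.
  apply: (key e 1 (-1)).
  - exact: ler01.
  - by rewrite oppr_le0 ler01.
  - exact: rmorph1.
  - by rewrite rmorphN rmorph1.
  - by apply: gen; [rewrite mulr1 | exact: rmorph1].
  - by apply: gen; [rewrite mulrNN mulr1 | rewrite rmorphN rmorph1].
have rAn : \rank A = n by apply/eqP; rewrite eqn_leq rank_leq_row rA.
have sA : (A <= col_mx b A)%MS by rewrite -addsmxE addsmxSr.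
have sB : (col_mx b A <= A)%MS.
  have [_ <-] := mxrank_leqif_sup sA.
  by rewrite eqn_leq mxrankS // rAn rk.
have bA : (b <= A)%MS.
  apply: submx_trans sB.
  by have := submx_refl (col_mx b A); rewrite col_mx_sub => /andP [].
set c := b *m pinvmx A.
have cA : c *m A = b by apply: mulmxKpV.
have c0 : c != 0 by apply: contra b0 => /eqP c0; rewrite -cA c0 mul0mx.
set s := ip c c.
have s0 : 0 < s.
  by rewrite lt_def ip_ge0 andbT; apply/eqP => /ip_eq0 /eqP; apply/negP.
set r := sq S s.
set t := sq S (1 + s).
have r0 : 0 < r by rewrite lt_def sq_neq0 // sq_ge0 // ltW.
have t1 : 1 <= t by rewrite -sq1 /t; apply: sq_le; rewrite ?ler01 // lerDl ltW.
have t0 : 0 < t by apply: lt_le_trans t1; exact: ltr01.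
have rn0 : r != 0 by rewrite gt_eqF.
have tn0 : t != 0 by rewrite gt_eqF.
have r2 : r * r = s by rewrite -expr2 sqK // ltW.
have t2 : t * t = 1 + r * r by rewrite -expr2 sqK ?r2 // addr_ge0 ?ler01 // ltW.
have rr : cj r = r by rewrite cjr // gtr0_real.
have tr : cj t = t by rewrite cjr // gtr0_real.
set u := r^-1 *: ad c.
have uu : ip u u = 1.
  by rewrite /u ipZl ipZr ip_adj -/s -r2 (fmorphV cj) rr; field.
have uA : ad u *m A = r^-1 *: b.
  by rewrite /u adjZ adjK (fmorphV cj) rr -scalemxAl cA.
have gen (sg : K) : sg * sg = 1 -> cj sg = sg ->
    exists G, uni G /\ G *m col_mx b A =
      col_mx 0 (A + (sg * r / t - (1 - sg / t) / r) *: (u *m b)).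
  move=> hs cs.
  have cal : cj (sg / t) = sg / t by rewrite (rmorphM cj) (fmorphV cj) cs tr.
  have cbe : cj (sg * r / t) = sg * r / t.
    by rewrite !(rmorphM cj) (fmorphV cj) cs tr rr.
  have hab : sg / t * (sg / t) + sg * r / t * (sg * r / t) = 1.
    have -> : sg / t * (sg / t) + sg * r / t * (sg * r / t) =
      (sg * sg) * (1 + r * r) / (t * t) by field.
    by rewrite hs mul1r t2 mulfV // -t2 mulf_neq0.
  exists (rotG u (sg / t) (sg * r / t)); split; first exact: (rot_uni uu cal cbe hab).
  rewrite rot_mul uA -scalemxAr; congr col_mx.
    by apply/matrixP => i j; rewrite !mxE; field; rewrite rn0 tn0.
  by apply/matrixP => i j; rewrite !mxE; ring.
apply: (key u (1 * r / t - (1 - 1 / t) / r) (-1 * r / t - (1 - -1 / t) / r)).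
- have -> : 1 * r / t - (1 - 1 / t) / r = (t - 1) / r + (r * r + 1 - t * t) / (t * r).
    by field; rewrite ?rn0 ?tn0.
  rewrite t2 (addrC 1) subrr mul0r addr0.
  by rewrite divr_ge0 ?subr_ge0 // ltW.
- have -> : -1 * r / t - (1 - -1 / t) / r = - ((r * r + t + 1) / (t * r)).
    by field; rewrite ?rn0 ?tn0.
  rewrite oppr_le0 divr_ge0 // ?mulr_ge0 ?addr_ge0 ?ler01 ?ltW //.
  by rewrite mulr_gt0.
- have rR : r \is Num.real by rewrite gtr0_real.
  have tR : t \is Num.real by rewrite gtr0_real.
  by rewrite cjr // ?(realB, realM, realV, realN, real1).
- have rR : r \is Num.real by rewrite gtr0_real.
  have tR : t \is Num.real by rewrite gtr0_real.
  by rewrite cjr // ?(realB, realM, realV, realN, real1).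
- by apply: gen; [rewrite mulr1 | exact: rmorph1].
- by apply: gen; [rewrite mulrNN mulr1 | rewrite (rmorphN cj) (rmorph1 cj)].
Qed.

Lemma rank_uni n m (U : 'M[K]_n) (X : 'M[K]_(n, m)) : uni U ->
  \rank (U *m X) = \rank X.
Proof.
move=> [U1 U2]; apply/eqP; rewrite eqn_leq mxrankM_maxr /=.
have h : X = ad U *m (U *m X) by rewrite mulmxA U1 mul1mx.
by rewrite {1}h mxrankM_maxr.
Qed.

Lemma uni_block n (U : 'M[K]_n) : uni U -> uni (block_mx (1%:M : 'M_1) 0 0 U).
Proof.
move=> [U1 U2]; rewrite /uni adj_block adj1 !adj0.
rewrite !mulmx_block !mulmx0 !mul0mx !mulmx1 !addr0 !add0r U1 U2.
by rewrite -scalar_mx_block.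
Qed.

Lemma row0_sub m1 m2 n (X : 'M[K]_(m1, n)) (Y : 'M[K]_(m2, n)) k :
  (X <= Y)%MS -> (row_mx (0 : 'M_(m1, k)) X <= row_mx (0 : 'M_(m2, k)) Y)%MS.
Proof.
have h q (Z : 'M[K]_(q, n)) : row_mx (0 : 'M_(q, k)) Z = Z *m row_mx 0 1%:M.
  by rewrite mul_mx_row mulmx0 mulmx1.
by move=> s; rewrite (h _ X) (h _ Y) submxMr.
Qed.

Lemma core n : forall m (M N : 'M[K]_(n, m)), (\rank N <= \rank M)%N ->
  exists U : 'M[K]_n,
    [/\ uni U, ((U *m N)^T <= M^T)%MS & re2 (ip M N) <= re2 (ip M (U *m N))].
Proof.
elim: n => [|n IH] m M N rk.
  exists 1%:M; split; first exact: uni1.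
    by rewrite mul1mx; apply: submx_full; rewrite /row_full mxrank_tr; apply/eqP/eqP; rewrite -leqn0 rank_leq_row.
  by rewrite mul1mx.
have [rM|rM] := ltnP (\rank M) n.+1; last first.
  exists 1%:M; split; first exact: uni1.
    rewrite mul1mx; apply: submx_full; rewrite /row_full mxrank_tr eqn_leq rM.
    by rewrite rank_leq_row.
  by rewrite mul1mx.
have [e [ee eM er]] := unit_ortho rM.
have [W [Wu WP]] := house (n := n) ee er.
set M1 := W *m M.
have hM1 : usubmx M1 = 0 by apply: WP.
set M2 := dsubmx M1.
have M1E : M1 = col_mx 0 M2 by rewrite -[M1]vsubmxK hM1.
set N1 := W *m N.
set b := usubmx N1; set A := dsubmx N1.
have N1E : N1 = col_mx b A by rewrite vsubmxK.
have rN1 : \rank N1 = \rank N by apply: rank_uni.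
have rM1 : \rank M1 = \rank M by apply: rank_uni.
have rM2 : \rank M2 = \rank M by rewrite -rM1 M1E rank_col_0mx.
have rk1 : (\rank (col_mx b A) <= n)%N.
  by rewrite -N1E rN1 -ltnS (leq_ltn_trans rk rM).
have [G [A' [Gu GE ineq1]]] := fold M2 rk1.
have rA' : (\rank A' <= \rank M2)%N.
  by rewrite -(rank_col_0mx 1) -GE rank_uni // -N1E rN1 rM2.
have [U2 [U2u U2s ineq2]] := IH _ _ _ rA'.
set U3 := block_mx (1%:M : 'M_1) 0 0 U2.
have U3u : uni U3 by apply: uni_block.
exists (ad W *m (U3 *m (G *m W))); split.
- by apply: uniM; [apply: uniV | apply: uniM => //; apply: uniM].
- have UN : ad W *m (U3 *m (G *m W)) *m N = ad W *m col_mx 0 (U2 *m A').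
    rewrite -!mulmxA -/N1 N1E GE /U3 mul_block_col !mul0mx mulmx0 !addr0 add0r //.
  have ME : M = ad W *m col_mx 0 M2.
    by rewrite -M1E /M1 mulmxA (proj1 Wu) mul1mx.
  rewrite UN {1}ME !trmx_mul submxMr // !tr_col_mx !trmx0.
  exact: row0_sub.
- have e1 : ip M N = ip M2 A.
    by rewrite -(ip_uni _ _ Wu) -/M1 -/N1 M1E N1E ip_col ip0l add0r.
  have e2 : ip M (ad W *m (U3 *m (G *m W)) *m N) = ip M2 (U2 *m A').
    rewrite -(ip_uni _ _ Wu) -/M1 M1E !mulmxA (proj2 Wu) mul1mx -!mulmxA -/N1 N1E GE.
    by rewrite /U3 mul_block_col !mul0mx mulmx0 !addr0 add0r ip_col ip0l add0r.
  by rewrite e1 e2 (le_trans ineq1 ineq2).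
Qed.

Lemma contract m n p (P : 'M[K]_(m, n)) (X : 'M[K]_(m, p)) :
  ad P *m P = 1%:M -> ip (ad P *m X) (ad P *m X) <= ip X X.
Proof.
move=> PP.
set Pi := P *m ad P.
set Q := 1%:M - Pi.
have adQ : ad Q = Q by rewrite /Q adjB adj1 /Pi adjM adjK.
have QQ : Q *m Q = Q.
  rewrite /Q mulmxBl mul1mx mulmxBr mulmx1 /Pi mulmxA -(mulmxA P) PP mulmx1.
  by rewrite subrr subr0.
have e1 : ip (Q *m X) (Q *m X) = ip X (Q *m X).
  by rewrite -{1}adQ -ip_mulr mulmxA QQ.
have e2 : ip (ad P *m X) (ad P *m X) = ip X (Pi *m X).
  by rewrite -ip_mulr mulmxA.
have e : ip X X - ip (ad P *m X) (ad P *m X) = ip (Q *m X) (Q *m X).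
  by rewrite e1 e2 /Q mulmxBl mul1mx ipDr ipNr.
by rewrite -subr_ge0 e ip_ge0.
Qed.

End Gen.

Lemma main (K : numFieldType) (S : cstr K) : lemma4p2_over (cj S) (sq S).
Proof.
move=> I1 I2 M N rk.
have [U [[U1 U2] Us ineq]] := core S rk.
have expand (X : 'M[K]_(I1, I2)) :
    ip S (M - X) (M - X) = ip S M M + ip S X X - re2 S (ip S M X).
  rewrite !ipDl !ipDr !ipNl !ipNr -(ip_conj S M X) /re2; ring.
have key : ip S (M - U *m N) (M - U *m N) <= ip S (M - N) (M - N).
  rewrite !expand ip_uni; last by split.
  by rewrite lerD2l lerN2.
have frobE' m n (X : 'M[K]_(m, n)) : frob (sq S) X = sq S (ip S X X).
  by rewrite /frob (frobE S).
split.
  exists U; split; first by rewrite /unitary_mx U1 U2.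
  split; first exact: Us.
  by rewrite !frobE'; apply: sq_le => //; apply: ip_ge0.
move=> UM UMo UMe.
exists (adjmx (cj S) U *m UM); split; [|split].
- by rewrite /orthonormal_cols adjM adjK mulmxA -(mulmxA _ U) U2 mulmx1.
- move: UMe; rewrite /ran_eq => /andP [_ sMU].
  have := submx_trans Us sMU => /submxP [D hD].
  rewrite /ran_sub.
  have -> : N = adjmx (cj S) U *m (U *m N) by rewrite mulmxA U1 mul1mx.
  by rewrite trmx_mul hD -mulmxA -trmx_mul submxMl.
- rewrite adjM adjK -mulmxA -mulmxBr !frobE'.
  apply: le_trans (sq_le S (ip_ge0 _ _) key).
  apply: sq_le; first exact: ip_ge0.
  exact: contract.
Qed.

Section Inst.
Variable R : rcfType.

Lemma R_cjK : involutive (idfun : R -> R). Proof. by []. Qed.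
Lemma R_cjr (x : R) : x \is Num.real -> idfun x = x. Proof. by []. Qed.
Lemma R_re2 (x : R) : x + idfun x \is Num.real. Proof. exact: num_real. Qed.
Lemma R_normE (x : R) : `|x| ^+ 2 = x * idfun x. Proof. by rewrite real_normK ?num_real // expr2. Qed.
Lemma R_sqge0 (x : R) : 0 <= x -> 0 <= Num.sqrt x. Proof. by rewrite sqrtr_ge0. Qed.
Lemma R_sqK (x : R) : 0 <= x -> Num.sqrt x ^+ 2 = x. Proof. exact: sqr_sqrtr. Qed.
Lemma R_sqle (x y : R) : 0 <= x -> x <= y -> Num.sqrt x <= Num.sqrt y.
Proof. by move=> _ h; apply: ler_wsqrtr. Qed.

Definition SR : cstr R := @CStr R idfun Num.sqrt R_cjK R_cjr R_re2 R_normE R_sqge0 R_sqK R_sqle.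

Lemma C_cjK : involutive (Num.conj : R[i] -> R[i]). Proof. exact: conjCK. Qed.
Lemma C_cjr (x : R[i]) : x \is Num.real -> Num.conj x = x. Proof. exact: conj_Creal. Qed.
Lemma C_re2 (x : R[i]) : x + Num.conj x \is Num.real.
Proof.
have -> : x + Num.conj x = 'Re x * 2.
  by rewrite ReE mulfVK // pnatr_eq0.
by rewrite realM // ?Creal_Re // realn.
Qed.
Lemma C_normE (x : R[i]) : `|x| ^+ 2 = x * Num.conj x. Proof. exact: normCK. Qed.
Lemma C_sqge0 (x : R[i]) : 0 <= x -> 0 <= sqrtC x. Proof. by rewrite sqrtC_ge0. Qed.
Lemma C_sqK (x : R[i]) : 0 <= x -> sqrtC x ^+ 2 = x. Proof. by rewrite sqrtCK. Qed.
Lemma C_sqle (x y : R[i]) : 0 <= x -> x <= y -> sqrtC x <= sqrtC y.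
Proof.
move=> hx hxy; have hy := le_trans hx hxy.
by rewrite ler_sqrtC.
Qed.

Definition SC : cstr R[i] :=
  @CStr R[i] Num.conj sqrtC C_cjK C_cjr C_re2 C_normE C_sqge0 C_sqK C_sqle.

End Inst.

Unset Implicit Arguments.

Theorem lemma4p2 (R : rcfType) :
  lemma4p2_over (K := R) idfun Num.sqrt /\
  lemma4p2_over (K := R[i]) Num.conj sqrtC.
Proof.
split.
  exact: (main (SR R)).
exact: (main (SC R)).
Qed.
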